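(* For every set of formulas $\Gamma$ and formula $\alpha$: $\circ^{*}(Var(\Gamma\cup\{\alpha\})),\Gamma\vdash_{LFI3}\alpha$ if and only if $\Gamma\vdash_{CPL}\alpha$, where $\circ^{*}(X)=\{\circ^{*}p: p\in X\}$.
   Context: Formulas are built from a countable set of propositional variables using unary $\neg,\circ$ and binary $\land,\lor,\to$. Define $\circ^*\alpha:=(\alpha\land\circ\alpha\land\circ\circ\alpha)\lor(\neg\alpha\land\circ\alpha\land\circ\circ\alpha)$. $Var(\Delta)$ is the set of propositional variables occurring in $\Delta$. On $\{0,1\}$ use Boolean $\land,\lor,\to,\sim$. Let $\mathbb{B}=\{x\in\{0,1\}^3: x_1\lor x_2=1,\ x_3\lor\sim(x_1\land x_2)=1\}$, with $T=(1,0,0)$ and $F=(0,1,0)$. The LFI3 algebra on $\mathbb{B}$: $a\dot\land b=(a_1\land b_1,\ a_2\lor b_2,\ (\sim a_2\land b_3)\lor(a_3\land\sim b_2)\lor(a_3\land b_3))$; $a\dot\lor b=(a_1\lor b_1,\ a_2\land b_2,\ (\sim a_1\land b_3)\lor(a_3\land\sim b_1)\lor(a_3\land b_3))$; $a\dot\to b=(a_1\to b_1,\ b_2\land(\sim a_2\lor a_3),\ (\sim a_2\land b_3)\lor(\sim a_2\land a_3\land\sim b_1)\lor(a_3\land b_3)\lor(\sim a_1\land a_3\land\sim b_1))$; $\dot\neg a=(a_2,a_1,a_3)$; $\dot\circ a=(\sim(a_1\land a_2),a_3,a_3\land\sim(a_1\land a_2))$; designated set $\{x:x_1=1\}$. CPL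 is the matrix logic of the two-element subalgebra $\{T,F\}$ with designated set $\{T\}$ (usual two-valued tables, $\circ\alpha$ always true). For matrix logics, $\Gamma\vdash\alpha$ iff every homomorphic valuation designating all of $\Gamma$ designates $\alpha$. *)

(* Defs.v *)
From Stdlib Require Import Bool.

Inductive form : Type :=
| Var  : nat -> form
| Neg  : form -> form
| Circ : form -> form
| And  : form -> form -> form
| Or   : form -> form -> form
| Imp  : form -> form -> form.

Record tv : Type := TV { c1 : bool; c2 : bool; c3 : bool }.

Definition impb (a b : bool) : bool := negb a || b.

(* Membership in the carrier B of the LFI3 algebra. *)
Definition inB (x : tv) : bool :=
  (c1 x || c2 x) && (c3 x || negb (c1 x && c2 x)).

Definition T3 : tv := TV true false false.
Definition F3 : tv := TV false true false.

Definition andT (a b : tv) : tv :=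
  TV (c1 a && c1 b) (c2 a || c2 b)
     ((negb (c2 a) && c3 b) || (c3 a && negb (c2 b)) || (c3 a && c3 b)).

Definition orT (a b : tv) : tv :=
  TV (c1 a || c1 b) (c2 a && c2 b)
     ((negb (c1 a) && c3 b) || (c3 a && negb (c1 b)) || (c3 a && c3 b)).

Definition impT (a b : tv) : tv :=
  TV (impb (c1 a) (c1 b)) (c2 b && (negb (c2 a) || c3 a))
     ((negb (c2 a) && c3 b) || (negb (c2 a) && c3 a && negb (c1 b))
      || (c3 a && c3 b) || (negb (c1 a) && c3 a && negb (c1 b))).

Definition negT (a : tv) : tv := TV (c2 a) (c1 a) (c3 a).

Definition circT (a : tv) : tv :=
  TV (negb (c1 a && c2 a)) (c3 a) (c3 a && negb (c1 a && c2 a)).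

Fixpoint eval (v : nat -> tv) (f : form) : tv :=
  match f with
  | Var n => v n
  | Neg a => negT (eval v a)
  | Circ a => circT (eval v a)
  | And a b => andT (eval v a) (eval v b)
  | Or a b => orT (eval v a) (eval v b)
  | Imp a b => impT (eval v a) (eval v b)
  end.

Definition LFI3_cons (G : form -> Prop) (a : form) : Prop :=
  forall v : nat -> tv,
    (forall n, inB (v n) = true) ->
    (forall g, G g -> c1 (eval v g) = true) ->
    c1 (eval v a) = true.

(* CPL: matrix of the subalgebra {T,F}, designated set {T}. *)
Definition CPL_cons (G : form -> Prop) (a : form) : Prop :=
  forall v : nat -> tv,
    (forall n, v n = T3 \/ v n = F3) ->
    (forall g, G g -> eval v g = T3) ->
    eval v a = T3.

Definition circstar (a : form) : form :=
  Or (And (And a (Circ a)) (Circ (Circ a)))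
     (And (And (Neg a) (Circ a)) (Circ (Circ a))).

Fixpoint occurs (n : nat) (f : form) : Prop :=
  match f with
  | Var m => n = m
  | Neg a | Circ a => occurs n a
  | And a b | Or a b | Imp a b => occurs n a \/ occurs n b
  end.

Definition VarsOf (G : form -> Prop) (a : form) (n : nat) : Prop :=
  (exists g, G g /\ occurs n g) \/ occurs n a.

Definition with_circstar (X : nat -> Prop) (G : form -> Prop) (f : form) : Prop :=
  (exists n, X n /\ f = circstar (Var n)) \/ G f.

(* Main.v *)
Require Import Defs.
From Stdlib Require Import Bool.

Definition classical (x : tv) : Prop := x = T3 \/ x = F3.

Lemma eval_class v f : (forall n, classical (v n)) -> classical (eval v f).
Proof.
  intro H; induction f; simpl; unfold classical in *; auto;
  repeat match goal with H : _ \/ _ |- _ => destruct H as [H|H]; rewrite H end;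
  simpl; unfold T3, F3; simpl; auto.
Qed.

Lemma eval_ext v w f : (forall n, occurs n f -> v n = w n) -> eval v f = eval w f.
Proof.
  induction f; simpl; intro H.
  - apply H; reflexivity.
  - rewrite IHf; auto.
  - rewrite IHf; auto.
  - rewrite IHf1, IHf2; auto.
  - rewrite IHf1, IHf2; auto.
  - rewrite IHf1, IHf2; auto.
Qed.

Lemma cs_class v n : inB (v n) = true -> c1 (eval v (circstar (Var n))) = true ->
  classical (v n).
Proof.
  unfold classical, T3, F3; simpl; destruct (v n) as [[] [] []]; simpl;
  intros; try discriminate; auto.
Qed.

Lemma cs_des v n : classical (v n) -> c1 (eval v (circstar (Var n))) = true.
Proof. intros [H|H]; simpl; rewrite H; reflexivity. Qed.

Lemma class_c1 x : classical x -> c1 x = true -> x = T3.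
Proof. intros [H|H]; subst; simpl; auto; discriminate. Qed.

Definition isclass (x : tv) : bool :=
  (c1 x && negb (c2 x) && negb (c3 x)) || (negb (c1 x) && c2 x && negb (c3 x)).

Lemma isclass_ok x : isclass x = true -> classical x.
Proof. unfold classical, T3, F3; destruct x as [[] [] []]; simpl; intros; try discriminate; auto. Qed.

Lemma classical_isclass x : classical x -> isclass x = true.
Proof. intros [H|H]; subst; reflexivity. Qed.

Theorem theorem21 (G : form -> Prop) (a : form) :
  LFI3_cons (with_circstar (VarsOf G a) G) a <-> CPL_cons G a.
Proof.
  split.
  - intros H v Hv HG.
    assert (Hc : forall n, classical (v n)) by (intro n; apply Hv).
    apply class_c1; [apply eval_class; auto|].
    apply H.
    + intro n; destruct (Hv n) as [E|E]; rewrite E; reflexivity.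
    + intros g [[n [_ E]]|Hg].
      * subst; apply cs_des; auto.
      * rewrite (HG g Hg); reflexivity.
  - intros H v HB Hdes.
    assert (Hvar : forall n, VarsOf G a n -> classical (v n)).
    { intros n Hn; apply cs_class; auto; apply Hdes; left; eauto. }
    set (w := fun n => if isclass (v n) then v n else T3).
    assert (Hw : forall n, classical (w n)).
    { intro n; unfold w; destruct (isclass (v n)) eqn:E.
      - apply isclass_ok; auto.
      - left; reflexivity. }
    assert (Hagree : forall n, VarsOf G a n -> w n = v n).
    { intros n Hn; unfold w; rewrite classical_isclass; auto. }
    assert (Ea : eval v a = eval w a).
    { apply eval_ext; intros n Hn; symmetry; apply Hagree; right; auto. }
    rewrite Ea, (H w).
    + reflexivity.
    + intro n; apply Hw.
    + intros g Hg.
      apply class_c1; [apply eval_class; auto|].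
      rewrite <- (eval_ext v w g).
      * apply Hdes; right; auto.
      * intros n Hn; symmetry; apply Hagree; left; eauto.
Qed.
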